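(* Let $W$ be a finite Weyl group acting on a real inner product space $V$, with positive system $\Phi_+$ and Weyl arrangement $\mathcal{A}=\{H_\alpha\mid\alpha\in\Phi_+\}$, and let $\mathbf{a},\mathbf{b}:\mathcal{A}\to\mathbb{Z}_{\ge0}$ be multiplicities. Let $\overline{H_\infty}=\{x_0=0\}\subset\mathbb{R}\oplus V$. Then: (i) for any $X\in L\left(\mathbf{c}\left(\mathcal{A}^{[-\mathbf{a},\mathbf{b}]}\right)\right)$ with $X\subseteq\overline{H_\infty}$, there exists a unique $Y\in L(\mathcal{A})$ such that $X=\mathbf{c}Y\cap\overline{H_\infty}$; (ii) for such $X$ and $Y$, $$\left(\mathbf{c}\left(\mathcal{A}^{[-\mathbf{a},\mathbf{b}]}\right)\right)_X=\mathbf{c}\left((\mathcal{A}_Y)^{[-\mathbf{a}_Y,\mathbf{b}_Y]}\right)=\mathbf{c}\left(\mathcal{A}(W_Y)^{[-\mathbf{a}_Y,\mathbf{b}_Y]}\right),$$ where $\mathbf{a}_Y,\mathbf{b}_Y$ are the restrictions of $\mathbf{a},\mathbf{b}$ to $\mathcal{A}_Y$.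
   Context: For $\alpha\in\Phi_+$ and $k\in\mathbb{Z}$, $H_\alpha=\{\alpha=0\}$ and $H_{\alpha,k}=\{\alpha=k\}$. For a subarrangement $\mathcal{B}\subseteq\mathcal{A}$ and multiplicities $\mathbf{a},\mathbf{b}$ on $\mathcal{B}$, the deformation is the affine arrangement $\mathcal{B}^{[-\mathbf{a},\mathbf{b}]}=\{H_{\alpha,k}\mid \alpha\in\Phi_+,\ H_\alpha\in\mathcal{B},\ k\in\mathbb{Z},\ -\mathbf{a}(H_\alpha)\le k\le\mathbf{b}(H_\alpha)\}$. The coning $\mathbf{c}(\mathcal{C})$ of an affine arrangement $\mathcal{C}$ in $V$ is the central arrangement in $\mathbb{R}\oplus V$ (extra coordinate $x_0$) consisting of $\overline{H_\infty}=\{x_0=0\}$ together with $\mathbf{c}H=\{\alpha-kx_0=0\}$ for each $H=\{\alpha=k\}\in\mathcal{C}$. $L(\cdot)$ denotes the intersection lattice (the set of nonempty intersections of subsets of hyperplanes, including the whole space). For $Y=H_1\cap\dots\cap H_r\in L(\mathcal{A})$, $\mathbf{c}Y=\mathbf{c}H_1\cap\dots\cap\mathbf{c}H_r$. For a central arrangement $\mathcal{C}$ and an element $Z$ of its intersection lattice, the localization is $\mathcal{C}_Z=\{H\in\mathcal{C}\mid Z\subseteq H\}$. $W_Y$ is the parabolic subgroup of $W$ fixing $Y$ pointwise, and $\mathcal{A}(W_Y)$ is the arrangement of its reflecting hyperplanes. *)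

(* Defs.v *)
From mathcomp Require Import all_boot all_order all_algebra.
From mathcomp Require Import boolp classical_sets reals.
Set Implicit Arguments. Unset Strict Implicit. Unset Printing Implicit Defensive.
Import Order.TTheory GRing.Theory Num.Theory.
Local Open Scope ring_scope.
Local Open Scope classical_set_scope.

Section WeylDefs.
Variables (R : realType) (n : nat).
Notation V := 'rV[R]_n.

Definition dot (u v : V) : R := (u *m v^T) 0 0.

Definition hyp (al : V) (k : R) : set V := [set x | dot al x = k].

Definition refl (be : V) : V -> V :=
  fun x => x - ((2 * dot be x) / dot be be) *: be.

Definition root_system (Phi : seq V) : Prop :=
  [/\ forall al, al \in Phi -> al != 0,
      forall al, al \in Phi -> - al \in Phi,
      forall al (c : R), al \in Phi -> c *: al \in Phi -> c = 1 \/ c = -1,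
      forall al be, al \in Phi -> be \in Phi -> refl al be \in Phi &
      forall al be, al \in Phi -> be \in Phi ->
        exists z : int, 2 * dot be al / dot al al = z%:~R].

Definition positive_system (Phi Phip : seq V) : Prop :=
  exists v : V, (forall al, al \in Phi -> dot v al != 0) /\
    (forall al, (al \in Phip) <-> (al \in Phi /\ 0 < dot v al)).

Definition weyl_arr (Phip : seq V) : set (set V) :=
  [set H | exists2 al, al \in Phip & H = hyp al 0].

(* deformation B^{[-a,b]} of a subarrangement B, as the set of defining
   pairs (alpha, k) of the hyperplanes H_{alpha,k} *)
Definition deform (Phip : seq V) (B : set (set V)) (a b : V -> nat)
  : set (V * R) :=
  [set p | exists al, exists k : int,
     [/\ al \in Phip, B (hyp al 0), - (a al)%:Z <= k, k <= (b al)%:Z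
       & p = (al, k%:~R)]].

(* points of R (+) V are pairs (x0, x) *)
Definition Hinf : set (R * V) := [set p | p.1 = 0].

(* coning of the hyperplane {alpha = k} : {alpha - k x0 = 0} *)
Definition chyp (p : V * R) : set (R * V) :=
  [set q | dot p.1 q.2 - p.2 * q.1 = 0].

Definition cone (C : set (V * R)) : set (set (R * V)) :=
  [set Hinf] `|` [set H | exists2 p, C p & H = chyp p].

(* cY for Y = H_1 cap ... cap H_r in L(A) (central H_i):
   cY = cH_1 cap ... cap cH_r = {(x0, x) | x in Y} *)
Definition coneY (Y : set V) : set (R * V) := [set q | Y q.2].

Inductive in_W (Phi : seq V) : (V -> V) -> Prop :=
| W_id : in_W Phi id
| W_step al w : al \in Phi -> in_W Phi w -> in_W Phi (refl al \o w).

Definition parabolic (Phi : seq V) (Y : set V) : set (V -> V) :=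
  [set w | in_W Phi w /\ forall y, Y y -> w y = y].

Definition refl_arr (G : set (V -> V)) : set (set V) :=
  [set H | exists be : V, [/\ be != 0, G (refl be) & H = hyp be 0]].

End WeylDefs.

Definition int_lattice (T : Type) (C : set (set T)) : set (set T) :=
  [set X | exists (r : nat) (Hs : 'I_r -> set T), (forall i, C (Hs i)) /\
     X = \bigcap_(i in [set: 'I_r]) Hs i /\ X !=set0].

Definition localize (T : Type) (C : set (set T)) (Z : set T) : set (set T) :=
  [set H | C H /\ Z `<=` H].

(* Main.v *)
Require Import Defs.
From mathcomp Require Import all_boot all_order all_algebra.
From mathcomp Require Import boolp classical_sets reals.
Set Implicit Arguments. Unset Strict Implicit. Unset Printing Implicit Defensive.
Import Order.TTheory GRing.Theory Num.Theory.
Local Open Scope ring_scope.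
Local Open Scope classical_set_scope.

Lemma dot_self0 (R : realType) n (v : 'rV[R]_n) : dot v v = 0 -> v = 0.
Proof.
rewrite /dot !mxE => H.
have H2 := psumr_eq0P (P := xpredT) (F := fun j => v 0 j * v^T j 0)
  (fun i _ => ltac:(rewrite /= !mxE; by rewrite -expr2 sqr_ge0)) H.
apply/rowP => j; rewrite mxE.
by have := H2 j isT; rewrite [v^T _ _]mxE => /eqP; rewrite mulf_eq0 orbb => /eqP.
Qed.

Lemma cone_ext (R : realType) n (C C' : set ('rV[R]_n * R)) :
  (forall p, C p <-> C' p) -> cone C = cone C'.
Proof.
move=> h; apply/seteqP; split => H [->|[p Cp ->]]; [by left| |by left|];
  right; exists p => //; exact/h.
Qed.

Lemma deform_ext (R : realType) n (Phip : seq 'rV[R]_n) B B' a b :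
  (forall al, al \in Phip -> (B (hyp al 0) <-> B' (hyp al 0))) ->
  deform Phip B a b = deform Phip B' a b.
Proof.
move=> h; apply/seteqP; split => p [al [k [H1 H2 H3 H4 H5]]];
  exists al, k; split => //; exact/(h _ H1).
Qed.

Lemma refl_fix (R : realType) n (be y : 'rV[R]_n) :
  be != 0 -> refl be y = y -> dot be y = 0.
Proof.
move=> nz; rewrite /refl => /eqP; rewrite subr_eq addrC -subr_eq subrr eq_sym.
rewrite scaler_eq0 (negbTE nz) orbF mulf_eq0 invr_eq0 mulf_eq0 pnatr_eq0 /=.
case/orP => /eqP // /dot_self0 /eqP; by rewrite (negbTE nz).
Qed.

Lemma refl_zero (R : realType) n (be y : 'rV[R]_n) :
  dot be y = 0 -> refl be y = y.
Proof. by move=> h; rewrite /refl h mulr0 mul0r scale0r subr0. Qed.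

Lemma arr_equiv (R : realType) n (Phi Phip : seq 'rV[R]_n) (Y : set 'rV[R]_n) :
  root_system Phi -> positive_system Phi Phip ->
  forall al, al \in Phip ->
  (localize (weyl_arr Phip) Y (hyp al 0) <->
   refl_arr (parabolic Phi Y) (hyp al 0)).
Proof.
move=> [nz _ _ _ _] [v [_ hv]] al alP.
have alPhi : al \in Phi by have [] := (hv al).1 alP.
split.
- move=> [_ sub]; exists al; split; first exact: nz.
    split; first exact: (W_step alPhi (W_id Phi)).
    by move=> y /sub; rewrite /hyp /= => /refl_zero.
  by [].
- move=> [be [benz [_ hfix] e]]; split; first by exists al.
  by move=> y /hfix /(refl_fix benz) h; rewrite e.
Qed.

Lemma uniqY (R : realType) n (X : set (R * 'rV[R]_n)) Y Y' :
  X = coneY Y `&` @Hinf R n -> X = coneY Y' `&` @Hinf R n -> Y = Y'.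
Proof.
move=> e1 e2; apply/seteqP; split => x Yx.
- have : X (0, x) by rewrite e1.
  by rewrite e2 => -[].
- have : X (0, x) by rewrite e2.
  by rewrite e1 => -[].
Qed.

Lemma dot0r (R : realType) n (a : 'rV[R]_n) : dot a 0 = 0.
Proof. by rewrite /dot trmx0 mulmx0 mxE. Qed.

Lemma part1 (R : realType) n (Phip : seq 'rV[R]_n) a b (X : set (R * 'rV[R]_n)) :
  int_lattice (cone (deform Phip (weyl_arr Phip) a b)) X ->
  X `<=` @Hinf R n ->
  exists Y, int_lattice (weyl_arr Phip) Y /\ X = coneY Y `&` @Hinf R n.
Proof.
set D := deform _ _ _ _.
move=> [r [Hs [hC [eX _]]]] Xsub.
have [f hf] : {f : 'I_r -> option ('rV[R]_n * R) & forall i,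
    match f i with None => Hs i = @Hinf R n | Some p => D p /\ Hs i = chyp p end}.
  apply: (@choice _ _ (fun i (o : option ('rV[R]_n * R)) =>
    match o with None => Hs i = @Hinf R n | Some p => D p /\ Hs i = chyp p end)) => i; case: (hC i) => [->|[p Dp ->]]; first by exists None.
  by exists (Some p).
pose s := pmap f (enum 'I_r).
have sD : forall p, p \in s -> D p.
  move=> p; rewrite mem_pmap => /mapP [i _ e].
  by have := hf i; rewrite -e => -[].
pose Y := [set x : 'rV[R]_n | forall p, p \in s -> dot p.1 x = 0].
have key : forall x, X (0, x) <-> Y x.
  move=> x; rewrite eX; split.
  - move=> h p; rewrite mem_pmap => /mapP [i _ e].
    have := hf i; rewrite -e => -[_ ehs].
    by have := h i I; rewrite ehs /chyp /= mulr0 subr0.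
  - move=> h i _; have := hf i; case e: (f i) => [p|] .
      move=> [_ ->]; rewrite /chyp /= mulr0 subr0; apply: h.
      by rewrite mem_pmap -e; apply: map_f; rewrite mem_enum.
    by move=> ->.
exists Y; split.
- exists (size s), (fun i => hyp (nth (0, 0) s i).1 0); split; [|split].
  + move=> i; have /sD [al [k [alP _ _ _ ->]]] := mem_nth (0, 0) (ltn_ord i).
    by exists al.
  + apply/seteqP; split => x.
      by move=> Yx i _; apply: Yx; exact: mem_nth.
    move=> h p ps; have := h (Ordinal (etrans (index_mem p s) ps)) I.
    by rewrite /hyp /= nth_index.
  + by exists 0; move=> p _; exact: dot0r.
- apply/seteqP; split => -[x0 x].
    move=> Xq; have h0 : x0 = 0 by exact: (Xsub _ Xq).
    by subst x0; split => //; exact/key.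
  move=> [Yx h0]; have e0 : x0 = 0 by exact: h0.
  by subst x0; exact/key.
Qed.

Unset Implicit Arguments.
Set Strict Implicit.

Theorem lemma3p1 (R : realType) (n : nat) (Phi Phip : seq 'rV[R]_n)
    (a b : 'rV[R]_n -> nat) :
  root_system Phi -> positive_system Phi Phip ->
  forall X : set (R * 'rV[R]_n),
    int_lattice (cone (deform Phip (weyl_arr Phip) a b)) X ->
    X `<=` @Hinf R n ->
    (exists! Y : set 'rV[R]_n,
        int_lattice (weyl_arr Phip) Y /\ X = coneY Y `&` @Hinf R n) /\
    (forall Y : set 'rV[R]_n,
        int_lattice (weyl_arr Phip) Y -> X = coneY Y `&` @Hinf R n ->
        localize (cone (deform Phip (weyl_arr Phip) a b)) X
          = cone (deform Phip (localize (weyl_arr Phip) Y) a b) /\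
        cone (deform Phip (localize (weyl_arr Phip) Y) a b)
          = cone (deform Phip (refl_arr (parabolic Phi Y)) a b)).
Proof.
move=> rs ps X hX Xsub; split.
  have [Y [hY eY]] := part1 hX Xsub.
  exists Y; split => // Y' [_ eY']; exact: uniqY eY eY'.
move=> Y _ eY; split; last first.
  by congr cone; apply: deform_ext => al alP; exact: arr_equiv.
apply/seteqP; split => H.
- move=> [[->|[p Dp ->]] sub]; first by left.
  right; exists p => //.
  case: Dp => [al [k [alP wal h1 h2 ep]]]; exists al, k; split => //.
  split => // y Yy.
  have : X (0, y) by rewrite eY.
  by move/sub; rewrite ep /chyp /= mulr0 subr0.
- move=> [->|[p Dp ->]].
    by split; [left|].
  case: Dp => [al [k [alP [wal sub] h1 h2 ep]]].
  split; first by right; exists p => //; exists al, k.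
  rewrite eY => -[x0 x] [Yx h0]; have e0 : x0 = 0 by exact: h0.
  by rewrite ep /chyp /= e0 mulr0 subr0; exact: sub.
Qed.
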